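(* Let $p(z)=z^n+a_nz^{n-1}+\cdots+a_2z+a_1$ be a complex monic polynomial with $n\geq2$ and $a_1\neq0$, with Frobenius companion matrix $C_p$. Then $$r(C_p)\leq\left\{\frac{1}{4}\left(\frac{\delta+1+\sqrt{(\delta-1)^2+4\delta'}}{2}\right)+\frac{3}{4}\left(\frac{1}{2}\left(\delta_1+\delta+\sqrt{(\delta_1-\delta)^2+4\delta_2}\right)+1\right)^{1/2}\right\}^{1/4}.$$
   Context: $r(\cdot)$ is the spectral radius. The Frobenius companion matrix of $p$ is the $n\times n$ matrix $C_p$ whose first row is $(-a_n,-a_{n-1},\dots,-a_2,-a_1)$, whose entries $(k+1,k)$ equal $1$ for $k=1,\dots,n-1$, and whose other entries are $0$. Define numbers $b_j,c_j,d_j$ ($j=1,\dots,n$) by: the first row of $C_p^2$ is $(b_n,b_{n-1},\dots,b_1)$, the first row of $C_p^3$ is $(c_n,\dots,c_1)$, the first row of $C_p^4$ is $(d_n,\dots,d_1)$ (so $b_j=a_na_j-a_{j-1}$, $c_j=-a_nb_j+a_{n-1}a_j-a_{j-2}$ with $a_0=a_{-1}=0$). Set $\alpha=\sum_{j=1}^n|a_j|^2$, $\beta=\sum_{j=1}^n|b_j|^2$, $\gamma=-\sum_{j=1}^n b_j\overline{a_j}$, $\delta=\frac{1}{2}\left(\alpha+\beta+\sqrt{(\alpha-\beta)^2+4|\gamma|^2}\right)$; $\alpha'=\sum_{j=3}^n|a_j|^2$, $\beta'=\sum_{j=3}^n|b_j|^2$, $\gamma'=-\sum_{j=3}^n\overline{a_j}b_j$,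 $\delta'=\frac12\left(\alpha'+\beta'+\sqrt{(\alpha'-\beta')^2+4|\gamma'|^2}\right)$; $\alpha_1=\sum_{j=1}^n|d_j|^2$, $\beta_1=\sum_{j=1}^n|c_j|^2$, $\gamma_1=\sum_{j=1}^n d_j\overline{c_j}$, $\delta_1=\frac12\left(\alpha_1+\beta_1+\sqrt{(\alpha_1-\beta_1)^2+4|\gamma_1|^2}\right)$; $\gamma_2=\sum_{j=1}^n d_j\overline{b_j}$, $\gamma_3=\sum_{j=1}^n d_j\overline{a_j}$, $\gamma_4=\sum_{j=1}^n c_j\overline{b_j}$, $\gamma_5=\sum_{j=1}^n c_j\overline{a_j}$, and $\delta_2=\frac12\Big(|\gamma_2|^2+|\gamma_3|^2+|\gamma_4|^2+|\gamma_5|^2+\sqrt{\big((|\gamma_2|^2+|\gamma_3|^2)-(|\gamma_4|^2+|\gamma_5|^2)\big)^2+4|\gamma_2\overline{\gamma_4}+\gamma_3\overline{\gamma_5}|^2}\Big)$. *)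

(* Defs.v *)
(* Complex numbers: an arbitrary numClosedFieldType C
   (this includes C = complex R for R : realType, i.e. the complex numbers). *)
From HB Require Import structures.
From mathcomp Require Import all_boot all_order all_algebra.
Set Implicit Arguments. Unset Strict Implicit. Unset Printing Implicit Defensive.
Import Order.TTheory GRing.Theory Num.Theory.
Local Open Scope ring_scope.

Section Defs.
Variable C : numClosedFieldType.
Variable n : nat.

(* coefficients a_1..a_n of p(z) = z^n + a_n z^(n-1) + ... + a_2 z + a_1,
   given as a : nat -> C (only the values a 1, ..., a n are used). *)

(* Frobenius companion matrix: first row (-a_n, ..., -a_1), entries (k+1,k) = 1
   (0-based: row 0, column k holds -a_(n-k); entry (k+1,k) is 1). *)
Definition companion (a : nat -> C) : 'M[C]_n :=
  \matrix_(i < n, k < n)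
    if (i == 0%N :> nat) then - a (n - k)%N
    else if (i == k.+1 :> nat) then 1 else 0.

(* the entry x_j of the first row (x_n, x_(n-1), ..., x_1) of M, j = 1..n:
   it sits in column n - j (0-based); default 0 outside the range. *)
Definition frow (M : 'M[C]_n) (j : nat) : C :=
  if (1 <= j <= n)%N then
    match @insub nat (fun k => k < n)%N 'I_n 0%N,
          @insub nat (fun k => k < n)%N 'I_n (n - j)%N with
    | Some i, Some k => M i k
    | _, _ => 0
    end
  else 0.

Definition bcoef (a : nat -> C) (j : nat) : C := frow (companion a ^+ 2) j.
Definition ccoef (a : nat -> C) (j : nat) : C := frow (companion a ^+ 3) j.
Definition dcoef (a : nat -> C) (j : nat) : C := frow (companion a ^+ 4) j.

Definition sq (x : C) : C := `|x| ^+ 2.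

Definition alpha a := \sum_(1 <= j < n.+1) sq (a j).
Definition beta a := \sum_(1 <= j < n.+1) sq (bcoef a j).
Definition gamma a := - \sum_(1 <= j < n.+1) bcoef a j * (a j)^*.
Definition delta a := 2^-1 * (alpha a + beta a +
   sqrtC ((alpha a - beta a) ^+ 2 + 4 * sq (gamma a))).

Definition alpha' a := \sum_(3 <= j < n.+1) sq (a j).
Definition beta' a := \sum_(3 <= j < n.+1) sq (bcoef a j).
Definition gamma' a := - \sum_(3 <= j < n.+1) (a j)^* * bcoef a j.
Definition delta' a := 2^-1 * (alpha' a + beta' a +
   sqrtC ((alpha' a - beta' a) ^+ 2 + 4 * sq (gamma' a))).

Definition alpha1 a := \sum_(1 <= j < n.+1) sq (dcoef a j).
Definition beta1 a := \sum_(1 <= j < n.+1) sq (ccoef a j).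
Definition gamma1 a := \sum_(1 <= j < n.+1) dcoef a j * (ccoef a j)^*.
Definition delta1 a := 2^-1 * (alpha1 a + beta1 a +
   sqrtC ((alpha1 a - beta1 a) ^+ 2 + 4 * sq (gamma1 a))).

Definition gamma2 a := \sum_(1 <= j < n.+1) dcoef a j * (bcoef a j)^*.
Definition gamma3 a := \sum_(1 <= j < n.+1) dcoef a j * (a j)^*.
Definition gamma4 a := \sum_(1 <= j < n.+1) ccoef a j * (bcoef a j)^*.
Definition gamma5 a := \sum_(1 <= j < n.+1) ccoef a j * (a j)^*.
Definition delta2 a :=
  2^-1 * (sq (gamma2 a) + sq (gamma3 a) + sq (gamma4 a) + sq (gamma5 a) +
    sqrtC (((sq (gamma2 a) + sq (gamma3 a)) - (sq (gamma4 a) + sq (gamma5 a))) ^+ 2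
           + 4 * sq (gamma2 a * (gamma4 a)^* + gamma3 a * (gamma5 a)^*))).

Definition bound12 a : C :=
  4.-root (4^-1 * ((delta a + 1 + sqrtC ((delta a - 1) ^+ 2 + 4 * delta' a)) / 2)
         + 3 / 4 * sqrtC (2^-1 * (delta1 a + delta a +
                  sqrtC ((delta1 a - delta a) ^+ 2 + 4 * delta2 a)) + 1)).

(* r(M) <= x : the spectral radius (max modulus of eigenvalues) is at most x. *)
Definition spectral_radius_le (M : 'M[C]_n) (x : C) : Prop :=
  forall lambda : C, eigenvalue M lambda -> `|lambda| <= x.

End Defs.

(* Main.v *)
Require Import Defs.
From HB Require Import structures.
From mathcomp Require Import all_boot all_order all_algebra ring zify.
Import Order.TTheory GRing.Theory Num.Theory.
Local Open Scope ring_scope.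
Set Implicit Arguments. Unset Strict Implicit. Unset Printing Implicit Defensive.

Section Alg.
Variable C : numClosedFieldType.

Definition lam (p r T : C) := 2^-1 * (p + r + sqrtC ((p - r) ^+ 2 + 4 * T)).

Lemma sq_le_le (d s : C) : d \is Num.real -> 0 <= s -> d ^+ 2 <= s ^+ 2 -> d <= s.
Proof.
move=> dr s0 h; have [d0|d0] := real_leP dr (@real0 _ ); first exact: le_trans d0 s0.
by rewrite -ler_sqr // nnegrE ltW.
Qed.

Lemma key (p r T X Y A B c : C) :
  0 <= p -> 0 <= r -> 0 <= T -> 0 <= X -> 0 <= Y -> A <= p * X -> B <= r * Y ->
  c \is Num.real -> c ^+ 2 <= 4 * T * X * Y ->
  A + B + c <= lam p r T * (X + Y).
Proof.
move=> p0 r0 T0 X0 Y0 hA hB cr hc.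
have pr : p - r \is Num.real by rewrite rpredB // ger0_real.
have D0 : 0 <= (p - r) ^+ 2 + 4 * T by rewrite addr_ge0 // -?realEsqr // mulr_ge0.
set S := sqrtC ((p - r) ^+ 2 + 4 * T).
have S0 : 0 <= S by rewrite sqrtC_ge0.
have SS : S ^+ 2 = (p - r) ^+ 2 + 4 * T by rewrite sqrtCK.
have le1 : (p - r) ^+ 2 <= S ^+ 2 by rewrite SS lerDl mulr_ge0.
set al := 2^-1 * (r - p + S); set be := 2^-1 * (p - r + S).
have al0 : 0 <= al.
  apply: mulr_ge0; first by rewrite invr_ge0 ler0n.
  rewrite (_ : r - p + S = S - (p - r)); last by ring.
  by rewrite subr_ge0 sq_le_le.
have be0 : 0 <= be.
  apply: mulr_ge0; first by rewrite invr_ge0 ler0n.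
  rewrite (_ : p - r + S = S - (r - p)); last by ring.
  rewrite subr_ge0 sq_le_le // ?rpredB ?ger0_real //.
  by rewrite -opprB sqrrN.
have albe : al * be = T.
  rewrite (_ : T = 4^-1 * (S ^+ 2 - (p - r) ^+ 2)); first by rewrite /al /be; field.
  by rewrite SS; field.
have -> : lam p r T * (X + Y) = (p * X + r * Y) + (al * X + be * Y).
  by rewrite /lam /al /be -/S; field.
apply: lerD; first exact: lerD.
apply: sq_le_le => //; first by rewrite addr_ge0 // mulr_ge0.
apply: (le_trans hc).
rewrite -subr_ge0 (_ : _ - _ = (al * X - be * Y) ^+ 2); last by rewrite -albe; ring.
by rewrite -realEsqr rpredB // ger0_real // mulr_ge0.
Qed.

Lemma lam_ge0 (p r T : C) : 0 <= p -> 0 <= r -> 0 <= T -> 0 <= lam p r T.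
Proof.
move=> p0 r0 T0; apply: mulr_ge0; first by rewrite invr_ge0 ler0n.
rewrite addr_ge0 ?addr_ge0 // sqrtC_ge0; apply: addr_ge0; last exact: mulr_ge0.
by rewrite -realEsqr rpredB // ger0_real.
Qed.

Lemma lamC (p r T : C) : lam p r T = lam r p T.
Proof. by rewrite /lam (addrC p) -(sqrrN (p - r)) opprB. Qed.

Lemma re_real (z : C) : z + z^* \is Num.real.
Proof. by rewrite CrealE rmorphD /= conjCK addrC. Qed.

Lemma re_bound (z : C) : (z + z^*) ^+ 2 <= 4 * `|z| ^+ 2.
Proof.
rewrite -subr_ge0 normCK (_ : _ - _ = (z - z^*) * (z - z^*)^*).
  exact: mul_conjC_ge0.
by rewrite rmorphB /= conjCK; ring.
Qed.

Lemma combo_core (p r x y g : C) : 0 <= p -> 0 <= r ->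
  `|x| ^+ 2 * p + `|y| ^+ 2 * r + (x * y^* * g + (x * y^* * g)^*)
   <= lam p r (`|g| ^+ 2) * (`|x| ^+ 2 + `|y| ^+ 2).
Proof.
move=> p0 r0; apply: key => //; rewrite ?exprn_ge0 ?re_real //.
- by rewrite mulrC.
- by rewrite mulrC.
apply: (le_trans (re_bound _)).
by rewrite !normrM norm_conjC !exprMn -!mulrA le_eqVlt; apply/orP; left; apply/eqP; ring.
Qed.

Lemma cs2 (a b c d : C) :
  `|a * c^* + b * d^*| ^+ 2 <= (`|a| ^+ 2 + `|b| ^+ 2) * (`|c| ^+ 2 + `|d| ^+ 2).
Proof.
rewrite -subr_ge0 !normCK (_ : _ - _ = (a * d - b * c) * (a * d - b * c)^*).
  exact: mul_conjC_ge0.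
by rewrite !(rmorphB, rmorphD, rmorphM) /= !conjCK; ring.
Qed.

Lemma combo2 (x y G2 G3 G4 G5 : C) :
  `|x * G2 + y * G4| ^+ 2 + `|x * G3 + y * G5| ^+ 2 <=
  lam (`|G2| ^+ 2 + `|G3| ^+ 2) (`|G4| ^+ 2 + `|G5| ^+ 2)
      (`|G2 * G4^* + G3 * G5^*| ^+ 2) * (`|x| ^+ 2 + `|y| ^+ 2).
Proof.
have -> : `|x * G2 + y * G4| ^+ 2 + `|x * G3 + y * G5| ^+ 2 =
  `|x| ^+ 2 * (`|G2| ^+ 2 + `|G3| ^+ 2) + `|y| ^+ 2 * (`|G4| ^+ 2 + `|G5| ^+ 2)
  + (x * y^* * (G2 * G4^* + G3 * G5^*) + (x * y^* * (G2 * G4^* + G3 * G5^*))^*).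
  by rewrite !normCK !(rmorphB, rmorphD, rmorphM) /= !conjCK; ring.
by apply: combo_core; rewrite addr_ge0 // exprn_ge0.
Qed.

Definition nrm (n : nat) (U : nat -> C) := \sum_(0 <= k < n) `|U k| ^+ 2.
Definition ip (n : nat) (U V : nat -> C) := \sum_(0 <= k < n) U k * (V k)^*.

Lemma nrm_ge0 n U : 0 <= nrm n U.
Proof. by apply: sumr_ge0 => k _; rewrite exprn_ge0. Qed.

Lemma nrmD n U V : nrm n (fun k => U k + V k) = nrm n U + nrm n V + (ip n U V + (ip n U V)^*).
Proof.
rewrite /nrm /ip rmorph_sum -!big_split; apply: eq_bigr => k _ /=.
by rewrite !normCK !(rmorphD, rmorphM) /= !conjCK; ring.
Qed.

Lemma nrmZ n x U : nrm n (fun k => x * U k) = `|x| ^+ 2 * nrm n U.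
Proof. by rewrite /nrm mulr_sumr; apply: eq_bigr => k _; rewrite normrM exprMn. Qed.

Lemma ipZ n x y U V : ip n (fun k => x * U k) (fun k => y * V k) = x * y^* * ip n U V.
Proof. by rewrite /ip mulr_sumr; apply: eq_bigr => k _; rewrite rmorphM; ring. Qed.

Lemma nrm_lin n x y U V : nrm n (fun k => x * U k + y * V k) =
  `|x| ^+ 2 * nrm n U + `|y| ^+ 2 * nrm n V + (x * y^* * ip n U V + (x * y^* * ip n U V)^*).
Proof. by rewrite (nrmD n (fun k => x * U k) (fun k => y * V k)) !nrmZ ipZ. Qed.

Lemma combo n x y U V : nrm n (fun k => x * U k + y * V k) <=
  lam (nrm n U) (nrm n V) (`|ip n U V| ^+ 2) * (`|x| ^+ 2 + `|y| ^+ 2).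
Proof. by rewrite nrm_lin; apply: combo_core; apply: nrm_ge0. Qed.

Lemma cs n U V : `|ip n U V| ^+ 2 <= nrm n U * nrm n V.
Proof.
have [N0|Npos] := eqVneq (nrm n V) 0.
  have V0 : forall k, (k < n)%N -> V k = 0.
    move=> k kn; move/eqP: N0; rewrite /nrm psumr_eq0 => [|i _]; last by rewrite exprn_ge0.
    move=> /allP /(_ k); rewrite mem_index_iota /= kn => /(_ isT).
    by rewrite expf_eq0 /= normr_eq0 => /eqP.
  have -> : ip n U V = 0.
    rewrite /ip big_nat big1 // => k /andP [_ kn]; by rewrite V0 // rmorph0 mulr0.
  by rewrite normr0 expr0n /= mulr_ge0 // nrm_ge0.
have N0 : 0 < nrm n V by rewrite lt_def Npos nrm_ge0.
set N := nrm n V in N0 Npos *.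
have := nrm_ge0 n (fun k => N * U k + (- ip n U V) * V k).
rewrite nrm_lin -/N (real_normK (gtr0_real N0)).
have Nr : N^* = N by rewrite conj_Creal // gtr0_real.
rewrite !(rmorphM, rmorphN) /= conjCK Nr normrN.
rewrite (_ : _ + _ = N * (N * nrm n U - `|ip n U V| ^+ 2)); last by rewrite normCK; ring.
by rewrite pmulr_rge0 // subr_ge0 mulrC.
Qed.
End Alg.

Section Mat.
Variable C : numClosedFieldType.
Variable m : nat.
Variable a : nat -> C.
Local Notation n := m.+2.
Local Notation Cm := (companion n a).

Definition R (K k : nat) : C := (Cm ^+ K) ord0 (inord k).
Definition ext (v : 'rV[C]_n) (i : nat) : C := if (i < n)%N then v ord0 (inord i) else 0.

Lemma Cpow K (i j : 'I_n) : (Cm ^+ K) i j =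
  if (i < K)%N then (Cm ^+ (K - i)) ord0 j else ((i : nat) == (j + K)%N)%:R.
Proof.
elim: K i => [|K IH] i.
  by rewrite expr0 !mxE ltn0 addn0.
case: i => [[|i] Hi].
  rewrite /= subn0; have -> : Ordinal Hi = ord0 by apply: val_inj.
  by [].

rewrite exprS -mulmxE mxE (bigD1 (inord i)) //= big1 => [|l /negbTE ne].
  rewrite addr0 !mxE /= inordK ?eqxx ?mul1r; last by rewrite -ltnS ltnW.
  by rewrite IH inordK ?ltnS ?subSS ?addnS ?eqSS // -ltnS ltnW.
rewrite !mxE /=; case: ifP => //= e; last by rewrite mul0r.
suff : l == inord i by rewrite ne.
rewrite -val_eqE /= inordK; [by rewrite -eqSS eq_sym | exact: ltnW].
Qed.

Lemma ext_ge (v : 'rV[C]_n) i : (n <= i)%N -> ext v i = 0.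
Proof. by rewrite /ext leqNgt => /negbTE ->. Qed.

Lemma rowC (v : 'rV[C]_n) K (k : 'I_n) :
  (v *m Cm ^+ K) ord0 k = \sum_(0 <= i < K) ext v i * R (K - i) k + ext v (k + K).
Proof.
pose F i := ext v i * (if (i < K)%N then R (K - i) k else (i == (k + K)%N)%:R).
rewrite mxE (eq_bigr (fun i : 'I_n => F i)) => [|i _]; last first.
  by rewrite /F Cpow /ext ltn_ord inord_val /R inord_val.
rewrite -(big_mkord xpredT F).
rewrite (_ : \sum_(0 <= i < n) F i = \sum_(0 <= i < n + K) F i); last first.
  rewrite [in RHS](big_cat_nat (leq0n n) (leq_addr K n)) /= [X in _ = _ + X]big1_seq ?addr0 //.
  by move=> i /andP [_]; rewrite mem_index_iota => /andP [ni _]; rewrite /F ext_ge // mul0r.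
rewrite (big_cat_nat (leq0n K) (leq_addl n K)) /=; congr (_ + _).
  by apply: eq_big_nat => i /andP [_ iK]; rewrite /F iK.
rewrite (eq_big_nat _ _ (F2 := fun i => if i == (k + K)%N then ext v i else 0)); last first.
  move=> i /andP [Ki _]; rewrite /F ltnNge Ki /=.
  by case: eqP => _; rewrite ?mulr1 ?mulr0.
rewrite -big_mkcond big_nat1_eq.
by rewrite leq_addl /= ltn_add2r ltn_ord.
Qed.

Lemma reidx (F : nat -> C) (p : nat) :
  \sum_(1 <= j < p.+1) F j = \sum_(0 <= k < p) F (p - k)%N.
Proof.
rewrite big_nat_rev -[X in \sum_(X <= _ < _) _]add0n big_addn subn1 /=.
by apply: eq_big_nat => i _; congr F; lia.
Qed.

Lemma reidx3 (F : nat -> C) (p : nat) : (2 <= p)%N ->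
  \sum_(3 <= j < p.+1) F j = \sum_(0 <= k < p) (if (3 <= p - k)%N then F (p - k)%N else 0).
Proof.
move=> p2; rewrite -(reidx (fun j => if (3 <= j)%N then F j else 0)).
rewrite (@big_cat_nat _ _ _ 3 1 p.+1) //= [X in X + _]big_nat [X in X + _]big1 ?add0r; last first.
  by move=> i /andP [_ i3]; case: ifP => // h; lia.
by apply: eq_big_nat => i /andP [i3 _]; rewrite i3.
Qed.

Lemma frowE (M : 'M[C]_n) k : (k < n)%N -> frow M (n - k) = M ord0 (inord k).
Proof.
move=> kn; rewrite /frow subn_gt0 kn leq_subr /=.
case: insubP => [i0 _ vi0|]; last by [].
case: insubP => [k0 _ vk0|/negP []]; last by lia.
congr (M _ _); apply: val_inj => /=; first by rewrite vi0.
rewrite vk0 inordK //; lia.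
Qed.

Lemma aR k : (k < n)%N -> a (n - k) = - R 1 k.
Proof. by move=> kn; rewrite /R expr1 mxE /= inordK // opprK. Qed.


Lemma bR K k : (k < n)%N -> frow (Cm ^+ K) (n - k) = R K k.
Proof. exact: frowE. Qed.

Definition Rr K k := if (3 <= n - k)%N then R K k else 0.

Lemma alphaE : alpha n a = nrm n (R 1).
Proof. by rewrite /alpha reidx; apply: eq_big_nat => k /andP [_ kn]; rewrite /sq aR // normrN. Qed.

Lemma betaE : beta n a = nrm n (R 2).
Proof. by rewrite /beta reidx; apply: eq_big_nat => k /andP [_ kn]; rewrite /sq /bcoef bR. Qed.

Lemma gammaE : gamma n a = ip n (R 2) (R 1).
Proof.
rewrite /gamma reidx -sumrN; apply: eq_big_nat => k /andP [_ kn].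
by rewrite /bcoef bR // aR // rmorphN mulrN opprK.
Qed.

Lemma alpha'E : alpha' n a = nrm n (Rr 1).
Proof.
rewrite /alpha' reidx3 //; apply: eq_big_nat => k /andP [_ kn].
by rewrite /Rr; case: ifP; rewrite ?normr0 ?expr0n // /sq aR // normrN.
Qed.

Lemma beta'E : beta' n a = nrm n (Rr 2).
Proof.
rewrite /beta' reidx3 //; apply: eq_big_nat => k /andP [_ kn].
by rewrite /Rr; case: ifP; rewrite ?normr0 ?expr0n // /sq /bcoef bR.
Qed.

Lemma gamma'E : gamma' n a = ip n (Rr 2) (Rr 1).
Proof.
rewrite /gamma' reidx3 // -sumrN; apply: eq_big_nat => k /andP [_ kn].
rewrite /Rr; case: ifP => _; last by rewrite mul0r oppr0.
by rewrite /bcoef bR // aR // rmorphN mulNr opprK mulrC.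
Qed.

Lemma alpha1E : alpha1 n a = nrm n (R 4).
Proof. by rewrite /alpha1 reidx; apply: eq_big_nat => k /andP [_ kn]; rewrite /sq /dcoef bR. Qed.

Lemma beta1E : beta1 n a = nrm n (R 3).
Proof. by rewrite /beta1 reidx; apply: eq_big_nat => k /andP [_ kn]; rewrite /sq /ccoef bR. Qed.

Lemma gamma1E : gamma1 n a = ip n (R 4) (R 3).
Proof. by rewrite /gamma1 reidx; apply: eq_big_nat => k /andP [_ kn]; rewrite /dcoef /ccoef !bR. Qed.

Lemma gamma2E : gamma2 n a = ip n (R 4) (R 2).
Proof. by rewrite /gamma2 reidx; apply: eq_big_nat => k /andP [_ kn]; rewrite /dcoef /bcoef !bR. Qed.

Lemma gamma3E : gamma3 n a = - ip n (R 4) (R 1).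
Proof.
rewrite /gamma3 reidx -sumrN; apply: eq_big_nat => k /andP [_ kn].
by rewrite /dcoef bR // aR // rmorphN mulrN.
Qed.

Lemma gamma4E : gamma4 n a = ip n (R 3) (R 2).
Proof. by rewrite /gamma4 reidx; apply: eq_big_nat => k /andP [_ kn]; rewrite /ccoef /bcoef !bR. Qed.

Lemma gamma5E : gamma5 n a = - ip n (R 3) (R 1).
Proof.
rewrite /gamma5 reidx -sumrN; apply: eq_big_nat => k /andP [_ kn].
by rewrite /ccoef bR // aR // rmorphN mulrN.
Qed.


Lemma eigpow (v : 'rV[C]_n) l K : v *m Cm = l *: v -> v *m Cm ^+ K = l ^+ K *: v.
Proof.
move=> hv; elim: K => [|K IH]; first by rewrite expr0 mulmx1 expr0 scale1r.
by rewrite exprSr -mulmxE mulmxA IH -scalemxAl hv scalerA exprSr.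
Qed.

Lemma normW (v : 'rV[C]_n) l K : v *m Cm = l *: v ->
  nrm n (fun k => (v *m Cm ^+ K) ord0 (inord k)) = `|l ^+ K| ^+ 2 * nrm n (ext v).
Proof.
move=> hv; rewrite (eigpow K hv) /nrm mulr_sumr; apply: eq_big_nat => k /andP [_ kn].
by rewrite mxE /ext kn normrM exprMn.
Qed.

Lemma splitN (v : 'rV[C]_n) K :
  nrm n (ext v) = \sum_(0 <= i < K) `|ext v i| ^+ 2 + nrm n (fun k => ext v (k + K)).
Proof.
rewrite /nrm (_ : \sum_(0 <= i < n) `|ext v i| ^+ 2 = \sum_(0 <= i < n + K) `|ext v i| ^+ 2); last first.
  rewrite [in RHS](big_cat_nat (leq0n n) (leq_addr K n)) /= [X in _ = _ + X]big1_seq ?addr0 //.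
  by move=> i /andP [_]; rewrite mem_index_iota => /andP [ni _]; rewrite ext_ge // normr0 expr0n.
rewrite (big_cat_nat (leq0n K) (leq_addl n K)) /=; congr (_ + _).
by rewrite -[X in \sum_(X <= _ < _) _]add0n big_addn addnK.
Qed.

Lemma rowK (v : 'rV[C]_n) K k : (k < n)%N ->
  (v *m Cm ^+ K) ord0 (inord k) = \sum_(0 <= i < K) ext v i * R (K - i) k + ext v (k + K).
Proof. by move=> kn; rewrite rowC inordK. Qed.

Lemma N_gt0 (v : 'rV[C]_n) : v != 0 -> 0 < nrm n (ext v).
Proof.
move=> vn0; rewrite lt_def nrm_ge0 andbT; apply: contra vn0 => /eqP N0.
have : \sum_(i < n) `|v ord0 i| ^+ 2 = 0.
  rewrite -[in RHS]N0 /nrm big_mkord.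
  by apply: eq_bigr => i _; rewrite /ext ltn_ord inord_val.
move/psumr_eq0P => h; apply/eqP/rowP => i; rewrite mxE.
have /eqP := h (fun j _ => exprn_ge0 _ (normr_ge0 _)) i isT.
by rewrite expf_eq0 /= normr_eq0 => /eqP; rewrite (ord1 0).
Qed.


Lemma deltaE : delta n a = lam (nrm n (R 2)) (nrm n (R 1)) (`|ip n (R 2) (R 1)| ^+ 2).
Proof. by rewrite lamC /lam /delta /sq alphaE betaE gammaE. Qed.

Lemma delta'E : delta' n a = lam (nrm n (Rr 2)) (nrm n (Rr 1)) (`|ip n (Rr 2) (Rr 1)| ^+ 2).
Proof. by rewrite lamC /lam /delta' /sq alpha'E beta'E gamma'E. Qed.

Lemma delta1E : delta1 n a = lam (nrm n (R 4)) (nrm n (R 3)) (`|ip n (R 4) (R 3)| ^+ 2).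
Proof. by rewrite /lam /delta1 /sq alpha1E beta1E gamma1E. Qed.

Lemma delta2E : delta2 n a =
  lam (`|ip n (R 4) (R 2)| ^+ 2 + `|ip n (R 4) (R 1)| ^+ 2)
      (`|ip n (R 3) (R 2)| ^+ 2 + `|ip n (R 3) (R 1)| ^+ 2)
      (`|ip n (R 4) (R 2) * (ip n (R 3) (R 2))^* + ip n (R 4) (R 1) * (ip n (R 3) (R 1))^*| ^+ 2).
Proof.
rewrite /lam /delta2 /sq gamma2E gamma3E gamma4E gamma5E !normrN !addrA.
by rewrite rmorphN /= mulrNN.
Qed.


Lemma bound2 (v : 'rV[C]_n) :
  nrm n (fun k => (v *m Cm ^+ 2) ord0 (inord k)) <= lam (delta n a) 1 (delta' n a) * nrm n (ext v).
Proof.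
set x0 := ext v 0; set x1 := ext v 1.
pose u k := x0 * R 2 k + x1 * R 1 k.
pose s k := ext v (k + 2).
pose u' k := x0 * Rr 2 k + x1 * Rr 1 k.
have -> : nrm n (fun k => (v *m Cm ^+ 2) ord0 (inord k)) = nrm n (fun k => u k + s k).
  apply: eq_big_nat => k /andP [_ kn].
  rewrite rowK // big_ltn // big_ltn // big_geq // addr0.
  by [].
rewrite (nrmD n u s) (splitN v 2) big_ltn // big_ltn // big_geq // addr0.
set P := `|x0| ^+ 2 + `|x1| ^+ 2.
set Q := nrm n s.
have dge0 : 0 <= delta n a by rewrite deltaE lam_ge0 // ?nrm_ge0 ?exprn_ge0.
have d'ge0 : 0 <= delta' n a by rewrite delta'E lam_ge0 // ?nrm_ge0 ?exprn_ge0.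
have hu : nrm n u <= delta n a * P by rewrite deltaE; apply: combo.
have hip : ip n u s = ip n u' s.
  apply: eq_big_nat => k /andP [_ kn]; rewrite /u /u' /Rr; case: ifP => // h.
  by rewrite /s ext_ge ?rmorph0 ?mulr0 //; lia.
have hc : `|ip n u s| ^+ 2 <= delta' n a * P * Q.
  rewrite hip; apply: (le_trans (cs n u' s)); apply: ler_wpM2r; first exact: nrm_ge0.
  by rewrite delta'E; apply: combo.
apply: key => //; rewrite ?ler01 ?exprn_ge0 ?normr_ge0 ?addr_ge0 ?nrm_ge0 ?re_real ?mul1r ?exprn_ge0 ?normr_ge0 //.
apply: (le_trans (re_bound _)).
have -> : 4 * delta' n a * P * Q = 4 * (delta' n a * P * Q) by rewrite !mulrA.
exact: ler_wpM2l.
Qed.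


Lemma lamE1 (x : C) : 0 <= x -> lam x 1 x = x + 1.
Proof.
move=> x0; rewrite /lam (_ : (x - 1) ^+ 2 + 4 * x = (x + 1) ^+ 2); last by ring.
by rewrite sqrCK ?addr_ge0 ?ler01 //; field.
Qed.

Lemma bound4 (v : 'rV[C]_n) :
  nrm n (fun k => (v *m Cm ^+ 4) ord0 (inord k)) <=
  (lam (delta1 n a) (delta n a) (delta2 n a) + 1) * nrm n (ext v).
Proof.
set x0 := ext v 0; set x1 := ext v 1; set x2 := ext v 2; set x3 := ext v 3.
pose U1 k := x0 * R 4 k + x1 * R 3 k.
pose U2 k := x2 * R 2 k + x3 * R 1 k.
pose u k := U1 k + U2 k.
pose s k := ext v (k + 4).
have -> : nrm n (fun k => (v *m Cm ^+ 4) ord0 (inord k)) = nrm n (fun k => u k + s k).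
  apply: eq_big_nat => k /andP [_ kn].
  rewrite rowK // big_ltn // big_ltn // big_ltn // big_ltn // big_geq // addr0.
  by rewrite /u /U1 /U2 !addrA.
rewrite (nrmD n u s) (splitN v 4) big_ltn // big_ltn // big_ltn // big_ltn // big_geq // addr0.
rewrite (_ : `|x0| ^+ 2 + (`|x1| ^+ 2 + (`|x2| ^+ 2 + `|x3| ^+ 2)) =
   (`|x0| ^+ 2 + `|x1| ^+ 2) + (`|x2| ^+ 2 + `|x3| ^+ 2)); last by rewrite !addrA.
set P01 := `|x0| ^+ 2 + `|x1| ^+ 2.
set P23 := `|x2| ^+ 2 + `|x3| ^+ 2.
set Q := nrm n s.
have P01ge0 : 0 <= P01 by rewrite addr_ge0 ?exprn_ge0.
have P23ge0 : 0 <= P23 by rewrite addr_ge0 ?exprn_ge0.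
have dge0 : 0 <= delta n a by rewrite deltaE lam_ge0 // ?nrm_ge0 ?exprn_ge0.
have d1ge0 : 0 <= delta1 n a by rewrite delta1E lam_ge0 // ?nrm_ge0 ?exprn_ge0.
have d2ge0 : 0 <= delta2 n a by rewrite delta2E lam_ge0 // ?addr_ge0 ?exprn_ge0.
set mu := lam (delta1 n a) (delta n a) (delta2 n a).
have mge0 : 0 <= mu by rewrite lam_ge0.
have h1 : nrm n U1 <= delta1 n a * P01 by rewrite delta1E; apply: combo.
have h2 : nrm n U2 <= delta n a * P23 by rewrite deltaE; apply: combo.
have hipU : ip n U1 U2 =
   x2^* * (x0 * ip n (R 4) (R 2) + x1 * ip n (R 3) (R 2)) +
   x3^* * (x0 * ip n (R 4) (R 1) + x1 * ip n (R 3) (R 1)).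
  rewrite /ip (eq_big_nat _ _ (F2 := fun k =>
    x0 * x2^* * (R 4 k * (R 2 k)^*) + x0 * x3^* * (R 4 k * (R 1 k)^*) +
    x1 * x2^* * (R 3 k * (R 2 k)^*) + x1 * x3^* * (R 3 k * (R 1 k)^*))); last first.
    by move=> k _; rewrite /U1 /U2 !(rmorphD, rmorphM) /=; ring.
  by rewrite !big_split /= -!mulr_sumr; ring.
have hcU : `|ip n U1 U2| ^+ 2 <= delta2 n a * P01 * P23.
  rewrite hipU (mulrC x2^*) (mulrC x3^*); apply: (le_trans (cs2 _ _ _ _)).
  apply: ler_wpM2r => //; rewrite delta2E; exact: combo2.
have hu : nrm n u <= mu * (P01 + P23).
  rewrite (nrmD n U1 U2); apply: key => //; first exact: re_real.
  apply: (le_trans (re_bound _)).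
  have -> : 4 * delta2 n a * P01 * P23 = 4 * (delta2 n a * P01 * P23) by rewrite !mulrA.
  exact: ler_wpM2l.
have hcs : `|ip n u s| ^+ 2 <= mu * (P01 + P23) * Q.
  apply: (le_trans (cs n u s)); apply: ler_wpM2r => //; exact: nrm_ge0.
rewrite -(lamE1 mge0); apply: key => //; rewrite ?ler01 ?nrm_ge0 ?addr_ge0 ?re_real ?mul1r ?exprn_ge0 ?normr_ge0 //.
apply: (le_trans (re_bound _)).
have -> : 4 * mu * (P01 + P23) * Q = 4 * (mu * (P01 + P23) * Q) by rewrite !mulrA.
exact: ler_wpM2l.
Qed.

End Mat.

Theorem mainTheorem12 (C : numClosedFieldType) (n : nat) (a : nat -> C) :
  (2 <= n)%N -> a 1%N != 0 ->
  spectral_radius_le (companion n a) (bound12 n a).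
Proof.
case: n => [|[|m]] // _ _ l /eigenvalueP [v hv vn0].
have N0 := N_gt0 vn0.
have b2 := bound2 a v; rewrite (normW 2 hv) ler_pM2r // normrX -exprM in b2.
have b4 := bound4 a v; rewrite (normW 4 hv) ler_pM2r // normrX -exprM in b4.
set mu := lam (delta1 (m.+2) a) (delta (m.+2) a) (delta2 (m.+2) a) in b4.
have mge0 : 0 <= mu.
  rewrite /mu lam_ge0 //.
  - by rewrite delta1E lam_ge0 // ?nrm_ge0 ?exprn_ge0.
  - by rewrite deltaE lam_ge0 // ?nrm_ge0 ?exprn_ge0.
  - by rewrite delta2E lam_ge0 // ?addr_ge0 ?exprn_ge0.
have L4 : `|l| ^+ 4 <= sqrtC (mu + 1).
  apply: sq_le_le; rewrite ?rpredX ?normr_real ?sqrtC_ge0 ?addr_ge0 ?ler01 //.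
  by rewrite sqrtCK -exprM.
have L2 : `|l| ^+ 4 <= lam (delta (m.+2) a) 1 (delta' (m.+2) a) by [].
rewrite /bound12.
set Z := (X in _ <= 4.-root X).
have hZ : `|l| ^+ 4 <= Z.
  rewrite (_ : `|l| ^+ 4 = 4^-1 * `|l| ^+ 4 + 3 / 4 * `|l| ^+ 4); last by field.
  apply: lerD.
    apply: ler_wpM2l; first by rewrite invr_ge0 ler0n.
    by move: L2; rewrite /lam mulrC.
  apply: ler_wpM2l; first by rewrite mulr_ge0 ?invr_ge0 ?ler0n.
  exact: L4.
have Z0 : 0 <= Z by apply: le_trans hZ; rewrite exprn_ge0.
rewrite -(@exprCK _ 4 `|l|) //.
by rewrite ler_rootC // nnegrE ?exprn_ge0.
Qed.
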